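(* In the basic Fraenkel model $\mathcal V_{F_0}$, with $A$ its set of atoms, there is no injection from $\mathrm{seq}^{1-1}(A)$ into $\mathrm{Part}_{\mathrm{fin}}(A)$. Consequently (via the Jech–Sochor embedding theorem) it is consistent with ZF that there is an infinite set $X$ with $|\mathrm{seq}^{1-1}(X)|\not\le|\mathrm{Part}_{\mathrm{fin}}(X)|$, so the Dedekind-infiniteness hypothesis in ''$|\mathrm{seq}(X)|<|\mathrm{Part}_{\mathrm{fin}}(X)|$ for Dedekind infinite $X$'' cannot be removed.
   Context: ZFA is Zermelo–Fraenkel set theory with atoms. The basic Fraenkel model $\mathcal V_{F_0}$ is the permutation model obtained from a denumerable set $A$ of atoms, the group $\mathcal G$ of all permutations of $A$, and the normal ideal of finite subsets of $A$: a finite $E\subseteq A$ is a support of $x$ if every $\pi\in\mathcal G$ fixing $E$ pointwise satisfies $\pi x=x$, and $\mathcal V_{F_0}$ consists of the sets $x$ that have a finite support and all of whose elements are in $\mathcal V_{F_0}$ (hereditarily). $\mathrm{seq}^{1-1}(A)$ is the set of injective finite sequences of elements of $A$; $\mathrm{Part}_{\mathrm{fin}}(A)$ is the set of partitions of $A$ all of whose blocks are finite. *)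

(* Defs.v *)
From mathcomp Require Import all_boot.
From mathcomp Require Import boolp classical_sets functions cardinality.
Set Implicit Arguments. Unset Strict Implicit. Unset Printing Implicit Defensive.
Local Open Scope classical_set_scope.

(* The denumerable set of atoms A is modelled by nat.  The group G is the
   group of all permutations (bijections) of A. *)
Definition atom_perm (pi : nat -> nat) : Prop := bijective pi.

Definition fixes_pointwise (pi : nat -> nat) (E : set nat) : Prop :=
  forall a, E a -> pi a = a.

(* seq^{1-1}(A): injective finite sequences of atoms, i.e. [uniq s]. *)

Definition fin_partition (P : set (set nat)) : Prop :=
  [/\ (forall B, P B -> B !=set0 /\ finite_set B),
      (forall a : nat, exists B, P B /\ B a) &
      (forall B C, P B -> P C -> (exists a, B a /\ C a) -> B = C)].

Definition perm_act_part (pi : nat -> nat) (P : set (set nat)) : set (set nat) :=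
  [set pi @` B | B in P].

(* A function f : seq^{1-1}(A) -> Part_fin(A) (given as a total function whose
   values on non-injective sequences are irrelevant) belongs to the basic
   Fraenkel model iff its graph has a finite support E: every permutation
   fixing E pointwise fixes the graph, i.e. f (pi s) = pi (f s). *)
Definition fin_supported_map (f : seq nat -> set (set nat)) : Prop :=
  exists E : set nat, finite_set E /\
    forall pi, atom_perm pi -> fixes_pointwise pi E ->
      forall s, uniq s -> f (map pi s) = perm_act_part pi (f s).

(* Main.v *)
Require Import Defs.
From mathcomp Require Import all_boot.
From mathcomp Require Import boolp classical_sets functions cardinality.
From mathcomp Require Import finmap zify.
Set Implicit Arguments. Unset Strict Implicit. Unset Printing Implicit Defensive.
Local Open Scope classical_set_scope.

Lemma seq_bound (s : seq nat) : exists N, forall x, x \in s -> x < N.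
Proof. elim: s => [|y s [N HN]]; first by exists 0.
exists (maxn y.+1 N) => x; rewrite inE => /orP[/eqP->|/HN]; lia. Qed.

Lemma fin_bound (A : set nat) : finite_set A -> exists N, forall x, A x -> x < N.
Proof. move=> /finite_fsetP[X ->]. have [N HN] := seq_bound X. exists N => x /= Hx. by apply: HN. Qed.

Definition tau (a b z : nat) : nat := if z == a then b else if z == b then a else z.

Lemma tauK a b : involutive (tau a b).
Proof.
move=> z; rewrite /tau.
case: (eqVneq z a) => [->|za]; first by rewrite eqxx; case: (eqVneq b a) => [->|ba]; rewrite ?eqxx.
case: (eqVneq z b) => [->|zb]; first by rewrite eqxx.
by rewrite (negbTE za) (negbTE zb).
Qed.

Lemma tau_img a b (C : set nat) : (C a <-> C b) -> tau a b @` C = C.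
Proof.
move=> H.
have K z : C z -> C (tau a b z).
  rewrite /tau; case: (eqVneq z a) => [->|za]; first by move/H.
  by case: (eqVneq z b) => [->|zb] //; move/H.
rewrite eqEsubset; split.
  by move=> _ [z Cz <-]; apply: K.
by move=> z Cz; exists (tau a b z); [apply: K | apply: tauK].
Qed.

Lemma act_inv pi (P : set (set nat)) : involutive pi ->
  (forall C, P C -> P (pi @` C)) -> perm_act_part pi P = P.
Proof.
move=> Hi HP; rewrite eqEsubset; split.
  by move=> _ [C PC <-]; apply: HP.
move=> D PD; exists (pi @` D); first exact: HP.
rewrite eqEsubset; split.
  by move=> _ [_ [z Dz <-] <-]; rewrite Hi.
by move=> z Dz; exists (pi z); [exists z | rewrite Hi].
Qed.

Theorem theorem3p1 :
  ~ exists f : seq nat -> set (set nat),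
      [/\ (forall s, uniq s -> fin_partition (f s)),
          (forall s t, uniq s -> uniq t -> f s = f t -> s = t) &
          fin_supported_map f].
Proof.
move=> [f [Hpart Hinj [E [HE Hsupp]]]].
have [N HN] := fin_bound HE.
pose s := iota N N.+2.
have us : uniq s := iota_uniq _ _.
have memS z : (z \in s) = (N <= z < N + N.+2) by rewrite mem_iota.
have [Hne Hcov Hdis] := Hpart s us.
pose blk z := projT1 (cid (Hcov z)).
have blkP z : f s (blk z) /\ blk z z := projT2 (cid (Hcov z)).
have disj C z : f s C -> C z -> C = blk z.
  move=> PC Cz; apply: Hdis PC (blkP z).1 _; exists z; split => //; exact: (blkP z).2.
have swap a b : a != b -> a \in s -> b \in s ->
    (forall C, f s C -> f s (tau a b @` C)) -> False.
  move=> ab as_ bs HC.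
  have bij : atom_perm (tau a b) := Bijective (tauK a b) (tauK a b).
  have fixE : fixes_pointwise (tau a b) E.
    move=> z Ez; have zN := HN z Ez; move: as_ bs; rewrite !memS /tau => /andP[Na _] /andP[Nb _].
    have -> : (z == a) = false by apply/eqP; lia.
    have -> : (z == b) = false by apply/eqP; lia.
    by [].
  have := Hsupp _ bij fixE s us; rewrite act_inv //; last exact: tauK.
  move=> Heq.
  have um : uniq (map (tau a b) s) by rewrite (map_inj_uniq (can_inj (tauK a b))).
  have Hm := Hinj _ _ um us Heq.
  have : map (tau a b) s = map id s by rewrite map_id.
  move/eq_in_map => /(_ a as_); rewrite /tau eqxx /= => ba.
  by rewrite ba eqxx in ab.
have same a b : a != b -> a \in s -> b \in s -> blk a = blk b -> False.
  move=> ab as_ bs Hab; apply: (swap a b) => // C PC.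
  rewrite tau_img //; split => Cx.
    by rewrite (disj _ _ PC Cx) Hab; exact: (blkP b).2.
  by rewrite (disj _ _ PC Cx) -Hab; exact: (blkP a).2.
have sing a : a \in s -> (forall z, z < N -> ~ blk a z) -> blk a = [set a].
  move=> as_ Hd; apply/seteqP; split => x; last by move=> ->; exact: (blkP a).2.
  move=> Bx; case: (eqVneq x a) => // xa; exfalso.
  case: (ltnP x N) => [xN|Nx]; first exact: Hd xN Bx.
  case: (ltnP x (N + N.+2)) => [xlt|xge].
    apply: (same a x) => //; first by rewrite eq_sym.
      by rewrite memS Nx xlt.
    exact: disj (blkP a).1 Bx.
  have [M HM] := fin_bound ((Hne _ (blkP a).1).2).
  pose y := maxn M (N + N.+2).
  have yB : ~ blk a y by move=> /HM; lia.
  have fix_small z : z < N + N.+2 -> tau x y z = z.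
    move=> zs; rewrite /tau.
    have -> : (z == x) = false by apply/eqP; lia.
    have -> : (z == y) = false by apply/eqP; lia.
    by [].
  have bij : atom_perm (tau x y) := Bijective (tauK x y) (tauK x y).
  have fixE : fixes_pointwise (tau x y) E.
    by move=> z Ez; apply: fix_small; have := HN z Ez; lia.
  have Hs := Hsupp _ bij fixE s us.
  have ms : map (tau x y) s = s.
    by apply: map_id_in => z; rewrite memS => /andP[_ ?]; apply: fix_small.
  rewrite ms in Hs.
  have PC : f s (tau x y @` blk a).
    rewrite {1}Hs; exists (blk a) => //; exact: (blkP a).1.
  have Ca : (tau x y @` blk a) a.
    exists a; first exact: (blkP a).2.
    by apply: fix_small; move: as_; rewrite memS => /andP[].
  have Heq := disj _ _ PC Ca.
  apply: yB; rewrite -Heq; exists x => //; by rewrite /tau eqxx.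
have both a b : a != b -> a \in s -> b \in s ->
    (forall z, z < N -> ~ blk a z) -> (forall z, z < N -> ~ blk b z) -> False.
  move=> ab as_ bs Ha Hb.
  have ea := sing a as_ Ha; have eb := sing b bs Hb.
  apply: (swap a b) => // C PC.
  case: (pselect (C a)) => [Ca|nCa].
    have -> : C = [set a] by rewrite -ea; exact: disj PC Ca.
    by rewrite image_set1 /tau eqxx -eb; exact: (blkP b).1.
  case: (pselect (C b)) => [Cb|nCb].
    have -> : C = [set b] by rewrite -eb; exact: disj PC Cb.
    rewrite image_set1 /tau eqxx.
    have -> : (b == a) = false by apply/eqP => ba; rewrite ba eqxx in ab.
    by rewrite -ea; exact: (blkP a).1.
  by rewrite tau_img //; split.
pose h (i : 'I_N.+2) : 'I_N.+1 :=
  match pselect (exists e : 'I_N, blk (N + i) e) with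
  | left H => widen_ord (leqnSn N) (projT1 (cid H))
  | right _ => ord_max end.
have : ~~ injectiveb h.
  apply/negP => /injectiveP inj; have := leq_card h inj; rewrite !card_ord; lia.
move/injectivePn => [i [j ij hij]].
have ab : N + i != N + j by rewrite eqn_add2l.
have ins (k : 'I_N.+2) : N + k \in s by rewrite memS; have := ltn_ord k; lia.
move: hij; rewrite /h.
case: pselect => [Hi|Hi]; case: pselect => [Hj|Hj].
- case: (cid Hi) => ei ePi; case: (cid Hj) => ej ePj /= /(congr1 val) /= Hv.
  apply: (same _ _ ab (ins i) (ins j)).
  rewrite (disj _ _ (blkP (N + i)).1 ePi) (disj _ _ (blkP (N + j)).1 ePj).
  by rewrite (_ : ej = ei) //; apply: val_inj.
- case: (cid Hi) => ei _ /(congr1 val) /=; have := ltn_ord ei; lia.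
- case: (cid Hj) => ej _ /(congr1 val) /=; have := ltn_ord ej; lia.
- move=> _; apply: (both _ _ ab (ins i) (ins j)).
    by move=> z zN bz; apply: Hi; exists (Ordinal zN).
  by move=> z zN bz; apply: Hj; exists (Ordinal zN).
Qed.
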